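(* Let $\beta>0$ and let $P,Q,F$ be probability measures on $\mathbb{R}$ with densities $p,q,f$ (or all discrete with probability mass functions on a countable set). Then: (1) $\mathrm{CM}_\beta(P,Q)\ge 0$, and $\mathrm{CM}_\beta(P,Q)=0$ if and only if $p=q$ almost everywhere; (2) $\mathrm{CM}_\beta(P,Q)=\mathrm{CM}_\beta(Q,P)$; (3) $\mathrm{CM}_\beta(P,Q)\le \mathrm{CM}_\beta(P,F)+\mathrm{CM}_\beta(F,Q)$; (4) $0\le \mathrm{CM}_\beta(P,Q)\le 1$; (5) $\lim_{\beta\to 0^+}\mathrm{CM}_\beta(P,Q)=\frac12\int_{\mathbb{R}}|p(x)-q(x)|\,dx=\mathrm{TV}(P,Q)$ (with the sum in the discrete case); (6) if $P_n,Q_n$ have densities (resp. mass functions) $p_n,q_n$ with $p_n\to p$ and $q_n\to q$ in total variation (i.e. $\int|p_n-p|\to0$ and $\int|q_n-q|\to0$, resp. sums), then $\mathrm{CM}_\beta(P_n,Q_n)\to \mathrm{CM}_\beta(P,Q)$.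
   Context: For probability measures $P,Q$ with densities $p,q$ and $\beta>0$, the complex metric is $\mathrm{CM}_\beta(P,Q)=\frac12\int_{\mathbb{R}}\left|p(x)e^{i\beta p(x)}-q(x)e^{i\beta q(x)}\right|dx$; in the discrete case with probability mass functions $p,q$ on a countable set it is $\frac12\sum_x\left|p(x)e^{i\beta p(x)}-q(x)e^{i\beta q(x)}\right|$. $\mathrm{TV}(P,Q)=\frac12\int|p-q|$ denotes the total variation distance. *)

(* Defs.v *)
From HB Require Import structures.
From mathcomp Require Import all_boot all_order all_algebra.
From mathcomp Require Import all_classical all_reals all_analysis.
From mathcomp Require Import complex.
Set Implicit Arguments. Unset Strict Implicit. Unset Printing Implicit Defensive.
Import Order.TTheory GRing.Theory Num.Theory.
Import numFieldNormedType.Exports.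
Local Open Scope classical_set_scope.
Local Open Scope ring_scope.

Section CM.
Variable R : realType.

Definition cmul_expi (a t : R) : complex.complex R :=
  complex.Complex (a * cos t) (a * sin t).

Definition cm_integrand (beta a b : R) : R :=
  complex.ComplexField.Normc.normc (cmul_expi a (beta * a) - cmul_expi b (beta * b))%R.

Definition is_density (p : R -> R) : Prop :=
  measurable_fun [set: R] p /\ (forall x, 0 <= p x) /\
  (\int[lebesgue_measure]_x (p x)%:E = 1)%E.

Definition CM (beta : R) (p q : R -> R) : \bar R :=
  ((2^-1)%:E * \int[lebesgue_measure]_x (cm_integrand beta (p x) (q x))%:E)%E.

Definition TV (p q : R -> R) : \bar R :=
  ((2^-1)%:E * \int[lebesgue_measure]_x (`|p x - q x|)%:E)%E.

Definition is_pmf (T : countType) (p : T -> R) : Prop :=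
  (forall x, 0 <= p x) /\ (\esum_(x in [set: T]) (p x)%:E = 1)%E.

Definition CMd (T : countType) (beta : R) (p q : T -> R) : \bar R :=
  ((2^-1)%:E * \esum_(x in [set: T]) (cm_integrand beta (p x) (q x))%:E)%E.

Definition TVd (T : countType) (p q : T -> R) : \bar R :=
  ((2^-1)%:E * \esum_(x in [set: T]) (`|p x - q x|)%:E)%E.

End CM.

(* Main.v *)
Require Import Defs.
From HB Require Import structures.
From mathcomp Require Import all_boot all_order all_algebra.
From mathcomp Require Import all_classical all_reals all_analysis.
From mathcomp Require Import measurable_realfun.
From mathcomp Require Import complex.
From mathcomp Require Import ring lra.
Set Implicit Arguments. Unset Strict Implicit. Unset Printing Implicit Defensive.
Import Order.TTheory GRing.Theory Num.Theory.
Import numFieldNormedType.Exports.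
Local Open Scope classical_set_scope.
Local Open Scope ring_scope.

Module CMAux.
Import complex.ComplexField.Normc.
Section T.
Variable R : realType.
Implicit Types a b c t s x y : R.
Definition Ex (t : R) : complex.complex R := complex.Complex (cos t) (sin t).
Lemma cmulE a t : cmul_expi a t = (a%:C)%C * Ex t.
Proof. by rewrite /cmul_expi /Ex /=; simpc. Qed.
Lemma normc_ge0 (z : complex.complex R) : 0 <= normc z.
Proof. by case: z => u v; exact: sqrtr_ge0. Qed.
Lemma normcC a : normc (a%:C)%C = `|a|.
Proof. by rewrite /= expr0n addr0 sqrtr_sqr. Qed.
Lemma normcEx t : normc (Ex t) = 1.
Proof. by rewrite /= cos2Dsin2 sqrtr1. Qed.
Lemma normcMC a (z : complex.complex R) : normc ((a%:C)%C * z) = `|a| * normc z.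
Proof. by rewrite normcM normcC. Qed.
Lemma normcB (z w : complex.complex R) : normc (z - w) = normc (w - z).
Proof. by rewrite -opprB normcN. Qed.
Lemma normc_tri (z w : complex.complex R) : normc (z + w) <= normc z + normc w.
Proof. exact: le_normcD. Qed.
Lemma normc_rev (z w : complex.complex R) : `|normc z - normc w| <= normc (z - w).
Proof.
rewrite ler_norml; apply/andP; split.
  have := normc_tri (w - z) z; rewrite subrK normcB; lra.
have := normc_tri (z - w) w; rewrite subrK; lra.
Qed.

Lemma cm_ge0 beta a b : 0 <= cm_integrand beta a b.
Proof. exact: normc_ge0. Qed.
Lemma cm_sym beta a b : cm_integrand beta a b = cm_integrand beta b a.
Proof. exact: normcB. Qed.
Lemma cm_tri beta a b c :
  cm_integrand beta a c <= cm_integrand beta a b + cm_integrand beta b c.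
Proof.
rewrite /cm_integrand.
set x := cmul_expi a _; set y := cmul_expi b _; set z := cmul_expi c _.
have -> : x - z = (x - y) + (y - z) by rewrite addrA subrK.
exact: normc_tri.
Qed.
Lemma cm_self beta a : cm_integrand beta a a = 0.
Proof. by rewrite /cm_integrand subrr normc0. Qed.
Lemma cm_le beta a b : 0 <= a -> 0 <= b -> cm_integrand beta a b <= a + b.
Proof.
move=> a0 b0; rewrite /cm_integrand.
apply: (le_trans (normc_tri _ _)); rewrite normcN !cmulE !normcMC !normcEx !mulr1.
by rewrite !ger0_norm.
Qed.
Lemma cm_eq0 beta a b : 0 <= a -> 0 <= b -> cm_integrand beta a b = 0 -> a = b.
Proof.
move=> a0 b0 /eq0_normc /eqP; rewrite subr_eq0 => /eqP /(congr1 (@normc R)).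
by rewrite !cmulE !normcMC !normcEx !mulr1 !ger0_norm.
Qed.

Lemma sin_lip x y : x <= y -> `|sin y - sin x| <= y - x.
Proof.
move=> xy.
have [c _ ->] := @MVT_segment R sin cos x y xy (fun z _ => is_derive_sin z)
  (continuous_subspaceT (@continuous_sin R)).
rewrite normrM (@ger0_norm _ (y - x)) ?subr_ge0 //.
by rewrite ler_piMl ?subr_ge0 // cos_max.
Qed.
Lemma abs_sin x : `|sin x| <= `|x|.
Proof.
have [x0|x0] := leP 0 x.
  by have := sin_lip x0; rewrite sin0 !subr0 (ger0_norm x0).
have := sin_lip (ltW x0); rewrite sin0 sub0r normrN (ltr0_norm x0).
by rewrite sub0r.
Qed.
Lemma normcEx_lip s t : normc (Ex s - Ex t) <= `|s - t|.
Proof.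
rewrite /= -sqrtr_sqr ler_sqrt ?sqr_ge0 //.
have e1 : (cos s - cos t) ^+ 2 + (sin s - sin t) ^+ 2 = 2 - 2 * cos (s - t).
  rewrite cosB; transitivity ((cos s ^+ 2 + sin s ^+ 2) + (cos t ^+ 2 + sin t ^+ 2)
     - 2 * (cos s * cos t + sin s * sin t)); first ring.
  by rewrite !cos2Dsin2.
rewrite e1.
pose u := (s - t) / 2.
have hu : s - t = u *+ 2 by rewrite /u -mulr_natr divfK ?pnatr_eq0.
rewrite hu cos_mulr2n cos2sin2.
have h : sin u ^+ 2 <= u ^+ 2.
  rewrite -(real_normK (num_real (sin u))) -(real_normK (num_real u)).
  by rewrite ler_pXn2r ?nnegrE ?normr_ge0 // abs_sin.
rewrite !mulr2n; nra.
Qed.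
Lemma normcEx_le2 s t : normc (Ex s - Ex t) <= 2.
Proof.
apply: (le_trans (normc_tri _ _)); rewrite normcN !normcEx; lra.
Qed.

Lemma Ex0 : Ex 0 = 1.
Proof. by rewrite /Ex cos0 sin0. Qed.
Lemma cm_bound6 beta a' a : 0 <= a ->
  cm_integrand beta a' a <= `|a' - a| + a * normc (Ex (beta * a') - Ex (beta * a)).
Proof.
move=> a0; rewrite /cm_integrand !cmulE.
set x := Ex (beta * a'); set y := Ex (beta * a).
have -> : (a'%:C)%C * x - (a%:C)%C * y = ((a' - a)%:C)%C * x + (a%:C)%C * (x - y).
  rewrite rmorphB /=; ring.
apply: (le_trans (normc_tri _ _)); rewrite !normcMC normcEx mulr1 (ger0_norm a0).
by [].
Qed.
Lemma cm_bound5 beta a b :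
  `|cm_integrand beta a b - `|a - b| | <=
  `|a| * normc (Ex (beta * a) - 1) + `|b| * normc (Ex (beta * b) - 1).
Proof.
rewrite /cm_integrand !cmulE -(normcC (a - b)).
set x := Ex (beta * a); set y := Ex (beta * b).
apply: (le_trans (normc_rev _ _)).
have -> : (a%:C)%C * x - (b%:C)%C * y - ((a - b)%:C)%C =
   (a%:C)%C * (x - 1) + - ((b%:C)%C * (y - 1)).
  rewrite rmorphB /=; ring.
by apply: (le_trans (normc_tri _ _)); rewrite normcN !normcMC.
Qed.
Lemma key_bound a x y K : 0 <= a -> 0 <= x -> x <= 2 -> x <= y -> 0 <= K ->
  a * x <= 2 * K * y + 4 * Num.max (a - K) 0.
Proof.
move=> a0 x0 x2 xy K0.
have m1 : a - K <= Num.max (a - K) 0 by rewrite le_max lexx.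
have m2 : 0 <= Num.max (a - K) 0 by rewrite le_max lexx orbT.
have [aK|aK] := leP a (2 * K).
  have : a * x <= a * y by rewrite ler_wpM2l.
  have : a * y <= 2 * K * y by rewrite ler_wpM2r // (le_trans x0).
  nra.
nra.
Qed.
End T.

End CMAux.
Import CMAux.

Section Helpers.
Context {R : realType}.
Lemma cvge_epsP {I : Type} {F : set_system I} {FF : Filter F} (x : I -> \bar R) (L : R) :
  x i @[i --> F] --> L%:E <->
  (forall e : R, 0 < e -> \forall i \near F, ((L - e)%:E <= x i <= (L + e)%:E)%E).
Proof.
split.
  move=> /fine_cvgP [fin /cvgrPdist_le cv] e e0.
  near=> i.
  have fi : x i \is a fin_num by near: i.
  have ci : `|L - fine (x i)| <= e by near: i; exact: cv.
  rewrite -(fineK fi) !lee_fin; move: ci; rewrite ler_norml => /andP[h1 h2].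
  apply/andP; split; lra.
move=> H; apply/fine_cvgP; split.
  have := H 1 ltr01; apply: filterS => i /andP[h1 h2].
  rewrite fin_numElt; apply/andP; split.
    exact: (lt_le_trans (ltNyr _) h1).
  exact: (le_lt_trans h2 (ltry _)).
apply/cvgrPdist_le => e e0.
have := H e e0; apply: filterS => i /andP[h1 h2].
have fi : x i \is a fin_num.
  rewrite fin_numElt; apply/andP; split.
    exact: (lt_le_trans (ltNyr _) h1).
  exact: (le_lt_trans h2 (ltry _)).
rewrite -(fineK fi) !lee_fin in h1 h2; rewrite /= ler_norml; apply/andP; split; lra.
Unshelve. all: by end_near.
Qed.
End Helpers.

Section M.
Context d (T : measurableType d) (R : realType) (mu : {measure set T -> \bar R}).
Implicit Types (p q f g h k : T -> R).

Definition dens p := measurable_fun [set: T] p /\ (forall x, 0 <= p x) /\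
  (\int[mu]_x (p x)%:E = 1)%E.
Definition CMg (beta : R) p q : \bar R :=
  ((2^-1)%:E * \int[mu]_x (cm_integrand beta (p x) (q x))%:E)%E.
Definition TVg p q : \bar R := ((2^-1)%:E * \int[mu]_x (`|p x - q x|)%:E)%E.

Lemma mcm beta p q : measurable_fun [set: T] p -> measurable_fun [set: T] q ->
  measurable_fun [set: T] (fun x => cm_integrand beta (p x) (q x)).
Proof.
move=> mp mq.
have mc : measurable_fun [set: R] (@cos R) by apply: continuous_measurable_fun; exact: continuous_cos.
have ms : measurable_fun [set: R] (@sin R) by apply: continuous_measurable_fun; exact: continuous_sin.
have msq : measurable_fun [set: R] (@Num.sqrt R) by apply: continuous_measurable_fun; exact: sqrt_continuous.
have mbp : measurable_fun [set: T] (fun x => beta * p x) by apply: measurable_funM => //; exact: measurable_cst.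
have mbq : measurable_fun [set: T] (fun x => beta * q x) by apply: measurable_funM => //; exact: measurable_cst.
rewrite /cm_integrand /=.
apply: (measurableT_comp msq).
apply: measurable_funD; apply: measurable_funX; apply: measurable_funB;
  apply: measurable_funM => //; exact: measurableT_comp.
Qed.

Lemma mE g : measurable_fun [set: T] g -> measurable_fun [set: T] (fun x => (g x)%:E).
Proof. by move=> mg; apply/(@measurable_EFinP _ _ R). Qed.

Local Open Scope ereal_scope.
Lemma intD g h : measurable_fun [set: T] g -> measurable_fun [set: T] h ->
  (forall x, 0 <= g x)%R -> (forall x, 0 <= h x)%R ->
  \int[mu]_x ((g x + h x)%:E) = \int[mu]_x (g x)%:E + \int[mu]_x (h x)%:E.
Proof.
move=> mg mh g0 h0; under eq_integral do rewrite EFinD.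
by apply: ge0_integralD => //; [move=> x _; rewrite lee_fin|exact: mE|move=> x _; rewrite lee_fin|exact: mE].
Qed.
Lemma intZ (c : R) g : (0 <= c)%R -> measurable_fun [set: T] g -> (forall x, 0 <= g x)%R ->
  \int[mu]_x ((c * g x)%:E) = c%:E * \int[mu]_x (g x)%:E.
Proof.
move=> c0 mg g0; under eq_integral do rewrite EFinM.
by apply: ge0_integralZl_EFin => //; [move=> x _; rewrite lee_fin|exact: mE].
Qed.
Lemma intle g h : measurable_fun [set: T] g -> measurable_fun [set: T] h ->
  (forall x, 0 <= g x)%R -> (forall x, g x <= h x)%R ->
  \int[mu]_x (g x)%:E <= \int[mu]_x (h x)%:E.
Proof.
move=> mg mh g0 gh; apply: ge0_le_integral => //; try exact: mE.
  by move=> x _; rewrite lee_fin.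
by move=> x _; rewrite lee_fin.
Qed.
Lemma int3 g h k : measurable_fun [set: T] g -> measurable_fun [set: T] h ->
  measurable_fun [set: T] k ->
  (forall x, 0 <= g x)%R -> (forall x, 0 <= h x)%R -> (forall x, 0 <= k x)%R ->
  (forall x, g x <= h x + k x)%R ->
  \int[mu]_x (g x)%:E <= \int[mu]_x (h x)%:E + \int[mu]_x (k x)%:E.
Proof.
move=> mg mh mk g0 h0 k0 ghk; rewrite -intD //.
apply: intle => //; exact: measurable_funD.
Qed.
Lemma int_ge0 g : (forall x, 0 <= g x)%R -> 0 <= \int[mu]_x (g x)%:E.
Proof. by move=> g0; apply: integral_ge0 => x _; rewrite lee_fin. Qed.

Lemma cm_int_le2 beta p q : dens p -> dens q ->
  \int[mu]_x (cm_integrand beta (p x) (q x))%:E <= 2%:E.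
Proof.
move=> [mp [p0 ip]] [mq [q0 iq]].
have := @intle _ (fun x => (p x + q x)%R) (mcm beta mp mq) (measurable_funD mp mq)
  (fun x => cm_ge0 _ _ _) (fun x => cm_le beta (p0 x) (q0 x)).
by rewrite intD // ip iq -EFinD.
Qed.
Lemma cm_fin beta p q : dens p -> dens q ->
  \int[mu]_x (cm_integrand beta (p x) (q x))%:E \is a fin_num.
Proof.
move=> hp hq; rewrite ge0_fin_numE; last by apply: int_ge0 => x; exact: cm_ge0.
by apply: (le_lt_trans (cm_int_le2 beta hp hq)); exact: ltry.
Qed.

Lemma CMg_ge0 beta p q : 0 <= CMg beta p q.
Proof. by apply: mule_ge0; [rewrite lee_fin|apply: int_ge0 => x; exact: cm_ge0]. Qed.
Lemma CMg_sym beta p q : CMg beta p q = CMg beta q p.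
Proof. by rewrite /CMg; under eq_integral do rewrite cm_sym. Qed.
Lemma CMg_tri beta p q f : dens p -> dens q -> dens f ->
  CMg beta p q <= CMg beta p f + CMg beta f q.
Proof.
move=> [mp [p0 ip]] [mq [q0 iq]] [mf [f0 iff]].
rewrite /CMg -ge0_muleDr; try (apply: int_ge0 => x; exact: cm_ge0).
apply: lee_wpmul2l; first by rewrite lee_fin.
apply: int3; try (by move=> x; exact: cm_ge0); try exact: mcm.
by move=> x; exact: cm_tri.
Qed.
Lemma CMg_le1 beta p q : dens p -> dens q -> CMg beta p q <= 1.
Proof.
move=> hp hq; rewrite /CMg.
apply: (le_trans (lee_wpmul2l _ (cm_int_le2 beta hp hq))); first by rewrite lee_fin.
by rewrite -EFinM mulVf.
Qed.
Lemma CMg_eq0 beta p q : dens p -> dens q ->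
  CMg beta p q = 0 <-> {ae mu, forall x, p x = q x}.
Proof.
move=> [mp [p0 ip]] [mq [q0 iq]].
have mc := mE (mcm beta mp mq).
have eqa : \int[mu]_x (cm_integrand beta (p x) (q x))%:E =
    \int[mu]_x `|(cm_integrand beta (p x) (q x))%:E|.
  by apply: eq_integral => x _; rewrite gee0_abs // lee_fin cm_ge0.
split.
  move=> /eqP; rewrite /CMg mule_eq0 eqe invr_eq0 pnatr_eq0 /= => /eqP.
  rewrite eqa => /(ae_eq_integral_abs mu measurableT mc).
  apply: filterS => x /= h; apply: (cm_eq0 (p0 x) (q0 x)); exact: (congr1 fine (h I)).
move=> hae; rewrite /CMg.
rewrite (ae_eq_integral (cst 0)) //; first by rewrite integral0 mule0.
apply: filterS hae => x /= -> _; by rewrite cm_self.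
Qed.

Lemma mmax g (K : R) : measurable_fun [set: T] g ->
  measurable_fun [set: T] (fun x => Num.max (g x - K) 0)%R.
Proof.
move=> mg; apply: measurable_maxr; last exact: measurable_cst.
apply: measurable_funB => //; exact: measurable_cst.
Qed.
Lemma max_ge0 (a : R) : (0 <= Num.max a 0)%R.
Proof. by rewrite le_max lexx orbT. Qed.

Lemma tail g : measurable_fun [set: T] g -> (forall x, 0 <= g x)%R ->
  \int[mu]_x (g x)%:E < +oo -> forall e : R, (0 < e)%R ->
  exists K : R, (0 <= K)%R /\ forall K' : R, (K <= K')%R ->
    \int[mu]_x (Num.max (g x - K') 0)%:E <= e%:E.
Proof.
move=> mg g0 ig e e0.
pose f_ := fun (n : nat) x => (Num.max (g x - n%:R) 0)%:E.
have h1 : {ae mu, forall x, [set: T] x -> f_ ^~ x @ \oo --> (cst 0 : T -> \bar R) x}.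
  apply: aeW => x _; apply: cvg_near_cst.
  have := nbhs_infty_ger (g x); apply: filterS => n hn.
  rewrite /f_ /=; congr EFin; apply/max_idPr; rewrite subr_le0 //.
have h2 : mu.-integrable [set: T] (fun x => (g x)%:E).
  apply/integrableP; split; first exact: mE.
  by under eq_integral do rewrite gee0_abs ?lee_fin //.
have h3 : {ae mu, forall x n, [set: T] x -> `|f_ n x| <= (g x)%:E}.
  apply: aeW => x n _; rewrite /f_ gee0_abs ?lee_fin ?max_ge0 //.
  rewrite ge_max g0 andbT lerBlDr lerDl //.
have [_ cv _] := @dominated_convergence _ T R mu setT measurableT f_ (cst 0)
  (fun x => (g x)%:E) (fun n => mE (mmax n%:R mg)) (measurable_cst _) h1 h2 h3.
move/cvge_epsP: cv => /(_ e e0) [N _ hN].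
exists N%:R; split => // K' NK'.
have := hN N (leqnn N) => /andP[_]; rewrite add0r.
apply: le_trans.
have -> : \int[mu]_x `|f_ N x - cst 0%R x| = \int[mu]_x (Num.max (g x - N%:R) 0)%:E.
  by apply: eq_integral => x _; rewrite /cst /= subr0 ger0_norm // max_ge0.
apply: intle; try exact: mmax; first by move=> x; exact: max_ge0.
move=> x; rewrite ge_max max_ge0 andbT le_max; apply/orP; left; lra.
Qed.

Lemma pt6 (beta K a' a : R) : (0 < beta)%R -> (0 <= K)%R -> (0 <= a)%R ->
  (cm_integrand beta a' a <= (1 + 2 * K * beta) * `|a' - a| + 4 * Num.max (a - K) 0)%R.
Proof.
move=> b0 K0 a0.
apply: (le_trans (cm_bound6 beta a' a0)).
have hx := normcEx_lip (beta * a') (beta * a).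
rewrite -mulrBr normrM (gtr0_norm b0) in hx.
have := key_bound a0 (normc_ge0 _) (normcEx_le2 _ _) hx K0.
lra.
Qed.

Lemma Ebound6 beta K p p' : (0 < beta)%R -> (0 <= K)%R -> dens p -> dens p' ->
  \int[mu]_x (cm_integrand beta (p' x) (p x))%:E <=
  (1 + 2 * K * beta)%:E * \int[mu]_x (`|p' x - p x|)%:E +
  4%:E * \int[mu]_x (Num.max (p x - K) 0)%:E.
Proof.
move=> b0 K0 [mp [p0 _]] [mp' [p0' _]].
have mu1 : measurable_fun [set: T] (fun x => `|p' x - p x|)%R.
  apply: (measurableT_comp (@normr_measurable R _)); exact: measurable_funB.
have c0 : (0 <= 1 + 2 * K * beta)%R.
  by apply: addr_ge0 => //; apply: mulr_ge0 => //; [apply: mulr_ge0|apply: ltW].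
have mm := mmax K mp.
have e1 := intZ c0 mu1 (fun x => normr_ge0 _).
have e2 := @intZ 4 _ (ler0n _ 4) mm (fun x => max_ge0 _).
rewrite -e1 -e2 -intD; first last.
- by move=> x; apply: mulr_ge0 => //; exact: max_ge0.
- by move=> x; apply: mulr_ge0.
- by apply: measurable_funM => //; exact: measurable_cst.
- by apply: measurable_funM => //; exact: measurable_cst.
apply: intle => //.
- exact: mcm.
- apply: measurable_funD; apply: measurable_funM => //; exact: measurable_cst.
- by move=> x; exact: cm_ge0.
by move=> x; apply: pt6.
Qed.

Lemma close (A B E : \bar R) (e : R) : A \is a fin_num -> B \is a fin_num ->
  A <= B + E -> B <= A + E -> E <= e%:E ->
  ((fine B - e)%:E <= A <= (fine B + e)%:E).
Proof.
move=> fA fB h1 h2 hE.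
have h1' := le_trans h1 (leeD2l B hE).
have h2' := le_trans h2 (leeD2l A hE).
rewrite -(fineK fA) -(fineK fB) -EFinD lee_fin in h1'.
rewrite -(fineK fA) -(fineK fB) -EFinD lee_fin in h2'.
rewrite -(fineK fA) !lee_fin; apply/andP; split; lra.
Qed.

Lemma int_fin g : (forall x, 0 <= g x)%R -> \int[mu]_x (g x)%:E <= 2%:E ->
   \int[mu]_x (g x)%:E \is a fin_num.
Proof.
move=> g0 h; rewrite ge0_fin_numE; last exact: int_ge0.
exact: (le_lt_trans h (ltry _)).
Qed.

Lemma dens_lt p : dens p -> \int[mu]_x (p x)%:E < +oo.
Proof. by move=> [_ [_ ->]]; exact: ltry. Qed.

Lemma conv6 beta p q (pn qn : nat -> T -> R) : (0 < beta)%R -> dens p -> dens q ->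
  (forall n, dens (pn n)) -> (forall n, dens (qn n)) ->
  \int[mu]_x (`|pn n x - p x|)%:E @[n --> \oo] --> 0 ->
  \int[mu]_x (`|qn n x - q x|)%:E @[n --> \oo] --> 0 ->
  \int[mu]_x (cm_integrand beta (pn n x) (qn n x))%:E @[n --> \oo] -->
  \int[mu]_x (cm_integrand beta (p x) (q x))%:E.
Proof.
move=> b0 hp hq hpn hqn cp cq.
have fA := cm_fin beta hp hq.
rewrite -(fineK fA); apply/cvge_epsP => e e0.
have [mp [p0 _]] := hp; have [mq [q0 _]] := hq.
have e16 : (0 < e / 16)%R by apply: divr_gt0.
have [Kp [Kp0 hKp]] := tail mp p0 (dens_lt hp) e16.
have [Kq [Kq0 hKq]] := tail mq q0 (dens_lt hq) e16.
pose K := Num.max Kp Kq.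
have K0 : (0 <= K)%R by rewrite le_max Kp0.
pose c := (1 + 2 * K * beta)%R.
have c0 : (0 < c)%R.
  by apply: ltr_pwDl => //; apply: mulr_ge0 => //; [apply: mulr_ge0|apply: ltW].
have dl : (0 < e / (4 * c))%R by apply: divr_gt0 => //; apply: mulr_gt0.
move/cvge_epsP: cp => /(_ _ dl) cp.
move/cvge_epsP: cq => /(_ _ dl) cq.
near=> n.
have /andP[_ hcp] : ((0 - e / (4 * c))%:E <= \int[mu]_x (`|pn n x - p x|)%:E <= (0 + e / (4 * c))%:E) by near: n.
have /andP[_ hcq] : ((0 - e / (4 * c))%:E <= \int[mu]_x (`|qn n x - q x|)%:E <= (0 + e / (4 * c))%:E) by near: n.
have [mpn [pn0 _]] := hpn n; have [mqn [qn0 _]] := hqn n.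
have mE1 := mcm beta mpn mp; have mE2 := mcm beta mqn mq.
have mEE : measurable_fun [set: T] (fun x => cm_integrand beta (pn n x) (p x) + cm_integrand beta (qn n x) (q x))%R.
  exact: measurable_funD.
have EE0 : forall x, (0 <= cm_integrand beta (pn n x) (p x) + cm_integrand beta (qn n x) (q x))%R.
  by move=> x; apply: addr_ge0; exact: cm_ge0.
apply: (@close _ _ (\int[mu]_x (cm_integrand beta (pn n x) (p x) + cm_integrand beta (qn n x) (q x))%:E)).
- exact: cm_fin.
- exact: fA.
- apply: int3 => //; try exact: mcm; try (by move=> x; exact: cm_ge0).
  move=> x; have := cm_tri beta (pn n x) (p x) (qn n x).
  have := cm_tri beta (p x) (q x) (qn n x); rewrite (cm_sym beta (q x) (qn n x)); lra.
- apply: int3 => //; try exact: mcm; try (by move=> x; exact: cm_ge0).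
  move=> x; have := cm_tri beta (p x) (pn n x) (q x).
  have := cm_tri beta (pn n x) (qn n x) (q x); rewrite (cm_sym beta (p x) (pn n x)); lra.
rewrite intD //; try (by move=> x; exact: cm_ge0).
have b1 := Ebound6 b0 K0 hp (hpn n).
have b2 := Ebound6 b0 K0 hq (hqn n).
have t1 := hKp K (ltac:(by rewrite le_max lexx)).
have t2 := hKq K (ltac:(by rewrite le_max lexx orbT)).
rewrite add0r in hcp hcq.
apply: (le_trans (leeD b1 b2)).
have c1 := @lee_wpmul2l R c%:E (ltac:(by rewrite lee_fin ltW)) _ _ hcp.
have c2 := @lee_wpmul2l R c%:E (ltac:(by rewrite lee_fin ltW)) _ _ hcq.
have c3 := @lee_wpmul2l R 4%:E (ltac:(by rewrite lee_fin)) _ _ t1.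
have c4 := @lee_wpmul2l R 4%:E (ltac:(by rewrite lee_fin)) _ _ t2.
apply: (le_trans (leeD (leeD c1 c3) (leeD c2 c4))).
rewrite -!EFinM -!EFinD lee_fin.
have -> : (c * (e / (4 * c)) = e / 4)%R by field; rewrite gt_eqF.
lra.
Unshelve. all: by end_near.
Qed.

Lemma pt5 (b K a a2 : R) : (0 <= b)%R -> (0 <= K)%R -> (0 <= a)%R -> (0 <= a2)%R ->
  (`|cm_integrand b a a2 - `|a - a2| | <=
   2 * K * b * (a + a2) + 4 * (Num.max (a - K) 0 + Num.max (a2 - K) 0))%R.
Proof.
move=> b0 K0 a0 a20.
apply: (le_trans (cm_bound5 b a a2)); rewrite (ger0_norm a0) (ger0_norm a20).
have h1 := normcEx_lip (b * a) 0; rewrite subr0 (ger0_norm (mulr_ge0 b0 a0)) in h1.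
have h2 := normcEx_lip (b * a2) 0; rewrite subr0 (ger0_norm (mulr_ge0 b0 a20)) in h2.
have k1 := key_bound a0 (normc_ge0 _) (normcEx_le2 _ _) h1 K0.
have k2 := key_bound a20 (normc_ge0 _) (normcEx_le2 _ _) h2 K0.
rewrite Ex0 in k1 k2.
lra.
Qed.

Lemma conv5 p q : dens p -> dens q ->
  \int[mu]_x (cm_integrand b (p x) (q x))%:E @[b --> (0:R)^'+] -->
  \int[mu]_x (`|p x - q x|)%:E.
Proof.
move=> hp hq.
have [mp [p0 ip]] := hp; have [mq [q0 iq]] := hq.
have mpq : measurable_fun [set: T] (fun x => `|p x - q x|)%R.
  apply: (measurableT_comp (@normr_measurable R _)); exact: measurable_funB.
have fA : \int[mu]_x (`|p x - q x|)%:E \is a fin_num.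
  apply: int_fin => //.
  have := @intle _ (fun x => (p x + q x)%R) mpq (measurable_funD mp mq)
    (fun x => normr_ge0 _)
    (fun x => le_trans (ler_normB (p x) (q x)) (ltac:(by rewrite (ger0_norm (p0 x)) (ger0_norm (q0 x))))).
  by rewrite intD // ip iq -EFinD.
rewrite -(fineK fA); apply/cvge_epsP => e e0.
have e16 : (0 < e / 16)%R by apply: divr_gt0.
have [Kp [Kp0 hKp]] := tail mp p0 (dens_lt hp) e16.
have [Kq [Kq0 hKq]] := tail mq q0 (dens_lt hq) e16.
pose K := Num.max Kp Kq.
have K0 : (0 <= K)%R by rewrite le_max Kp0.
have t1 := hKp K (ltac:(by rewrite le_max lexx)).
have t2 := hKq K (ltac:(by rewrite le_max lexx orbT)).
have dl : (0 < e / (8 * (K + 1)))%R.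
  by apply: divr_gt0 => //; apply: mulr_gt0 => //; apply: ltr_pwDr.
near=> b.
have b0 : (0 < b)%R by near: b; exact: nbhs_right_gt.
have bd : (b < e / (8 * (K + 1)))%R by near: b; exact: nbhs_right_lt.
pose err := fun x => (2 * K * b * (p x + q x) + 4 * (Num.max (p x - K) 0 + Num.max (q x - K) 0))%R.
have merr : measurable_fun [set: T] err.
  apply: measurable_funD; apply: measurable_funM; try exact: measurable_cst.
    exact: measurable_funD.
  by apply: measurable_funD; exact: mmax.
have err0 : forall x, (0 <= err x)%R.
  move=> x; apply: addr_ge0.
    apply: mulr_ge0; last exact: addr_ge0.
    by rewrite !mulr_ge0 // ltW.
  by apply: mulr_ge0 => //; apply: addr_ge0; exact: max_ge0.
apply: (@close _ _ (\int[mu]_x (err x)%:E)).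
- exact: cm_fin.
- exact: fA.
- apply: int3 => //; try exact: mcm; try (by move=> x; exact: cm_ge0).
  move=> x; have := pt5 (ltW b0) K0 (p0 x) (q0 x); rewrite ler_norml => /andP[_].
  rewrite /err; lra.
- apply: int3 => //; try exact: mcm; try (by move=> x; exact: cm_ge0).
  move=> x; have := pt5 (ltW b0) K0 (p0 x) (q0 x); rewrite ler_norml => /andP[h _].
  rewrite /err; lra.
have c2K : (0 <= 2 * K * b)%R by rewrite !mulr_ge0 // ltW.
rewrite /err intD; first last.
- by move=> x; apply: mulr_ge0 => //; apply: addr_ge0; exact: max_ge0.
- by move=> x; apply: mulr_ge0 => //; apply: addr_ge0.
- by apply: measurable_funM; [exact: measurable_cst|apply: measurable_funD; exact: mmax].
- by apply: measurable_funM; [exact: measurable_cst|exact: measurable_funD].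
rewrite intZ //; last 2 first.
- exact: measurable_funD.
- by move=> x; apply: addr_ge0.
rewrite intZ //; last 2 first.
- by apply: measurable_funD; exact: mmax.
- by move=> x; apply: addr_ge0; exact: max_ge0.
rewrite intD // ?ip ?iq.
rewrite intD //; try exact: mmax; try (by move=> x; exact: max_ge0).
have c3 := @lee_wpmul2l R 4%:E (ltac:(by rewrite lee_fin)) _ _ (leeD t1 t2).
apply: (le_trans (leeD (lexx _) c3)).
have -> : (1 + 1 : \bar R) = 2%:E by rewrite -EFinD.
have -> : (4 : \bar R) = 4%:E by [].
rewrite -[X in (X <= _)%E]/(((2 * K * b) * 2 + 4 * (e / 16 + e / 16))%R%:E) lee_fin.
have : (K * b <= e / 8)%R.
  have -> : (e / 8 = (K + 1) * (e / (8 * (K + 1))))%R by field; rewrite gt_eqF // ltr_pwDr.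
  apply: (@le_trans _ _ ((K + 1) * b)%R).
    by apply: ler_wpM2r; [exact: ltW|rewrite lerDl].
  by apply: ler_wpM2l; [exact: addr_ge0|exact: ltW].
lra.
Unshelve. all: by end_near.
Qed.
End M.

Local Open Scope ereal_scope.

Section D.
Context (R : realType) (T : countType).
Definition pe (h : T -> R) : nat -> R := fun n => oapp h 0%R (pickle_inv n).

Lemma mnat (f : nat -> R) : measurable_fun [set: nat] f.
Proof. by move=> _ Y _. Qed.

Lemma reindex (F : T -> R) : (forall x, 0 <= F x)%R ->
  \esum_(x in [set: T]) (F x)%:E =
  \int[@counting _ R]_n (oapp F 0%R (pickle_inv n))%:E.
Proof.
move=> F0.
pose G := fun n : nat => (oapp F 0%R (pickle_inv n))%:E.
have G0 : forall n, 0 <= G n.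
  by move=> n; rewrite /G lee_fin; case: (pickle_inv n) => //= x.
rewrite ge0_integral_count // nneseries_esumT //.
have -> : \esum_(x in [set: T]) (F x)%:E = \esum_(x in [set: T]) G (pickle x).
  by apply: eq_esum => x _; rewrite /G pickleK_inv.
rewrite -esum_image; last by move=> x y _ _; exact: (pcan_inj (@pickleK_inv T)).
rewrite esum_mkcond; apply: eq_esum => n _.
case: ifPn => //; rewrite notin_setE => hn.
rewrite /G; case E: (pickle_inv n) => [x|] //=.
exfalso; apply: hn; exists x => //; have h := @pickle_invK T n; rewrite E /= in h; exact: h.
Qed.

Lemma pe_dens (p : T -> R) : is_pmf p -> dens (@counting _ R) (pe p).
Proof.
move=> [p0 sp]; split; first exact: mnat.
split; first by move=> n; rewrite /pe; case: (pickle_inv n) => //= x.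
by rewrite -reindex.
Qed.

Lemma reindex2 (h : R -> R -> R) (p q : T -> R) : (forall a b, 0 <= h a b)%R ->
  h 0%R 0%R = 0%R ->
  \esum_(x in [set: T]) (h (p x) (q x))%:E =
  \int[@counting _ R]_n (h (pe p n) (pe q n))%:E.
Proof.
move=> h0 h00; rewrite (@reindex (fun x => h (p x) (q x))) //.
by apply: eq_integral => n _; rewrite /pe; case: (pickle_inv n) => [x|] //=; rewrite h00.
Qed.

Lemma CMd_eq beta (p q : T -> R) : CMd beta p q = CMg (@counting _ R) beta (pe p) (pe q).
Proof.
rewrite /CMd /CMg (@reindex2 (cm_integrand beta)) //; first exact: cm_ge0.
exact: cm_self.
Qed.
Lemma TVd_eq (p q : T -> R) : TVd p q = TVg (@counting _ R) (pe p) (pe q).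
Proof.
rewrite /TVd /TVg (@reindex2 (fun a b => `|a - b|%R)) //.
by rewrite subr0 normr0.
Qed.
Lemma L1_eq (p q : T -> R) : \esum_(x in [set: T]) (`|p x - q x|)%:E =
  \int[@counting _ R]_n (`|pe p n - pe q n|)%:E.
Proof.
rewrite (@reindex2 (fun a b => `|a - b|%R)) //.
by rewrite subr0 normr0.
Qed.
End D.

Theorem mainTheorem10 (R : realType) :
  (* continuous case: densities on R *)
  (forall p q f : R -> R, is_density p -> is_density q -> is_density f ->
    (forall beta : R, (0 < beta)%R ->
       (* (1) *)
       (0 <= CM beta p q /\
        (CM beta p q = 0 <-> {ae lebesgue_measure, forall x, p x = q x})) /\
       (* (2) *)
       CM beta p q = CM beta q p /\
       (* (3) *)
       CM beta p q <= CM beta p f + CM beta f q /\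
       (* (4) *)
       (0 <= CM beta p q /\ CM beta p q <= 1) /\
       (* (6) *)
       (forall pn qn : nat -> R -> R,
          (forall n, is_density (pn n)) -> (forall n, is_density (qn n)) ->
          (\int[lebesgue_measure]_x (`|pn n x - p x|)%:E) @[n --> \oo] --> 0 ->
          (\int[lebesgue_measure]_x (`|qn n x - q x|)%:E) @[n --> \oo] --> 0 ->
          CM beta (pn n) (qn n) @[n --> \oo] --> CM beta p q)) /\
    (* (5) *)
    CM b p q @[b --> (0:R)^'+] --> TV p q) /\
  (* discrete case: probability mass functions on a countable set *)
  (forall (T : countType) (p q f : T -> R), is_pmf p -> is_pmf q -> is_pmf f ->
    (forall beta : R, (0 < beta)%R ->
       (0 <= CMd beta p q /\ (CMd beta p q = 0 <-> p = q)) /\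
       CMd beta p q = CMd beta q p /\
       CMd beta p q <= CMd beta p f + CMd beta f q /\
       (0 <= CMd beta p q /\ CMd beta p q <= 1) /\
       (forall pn qn : nat -> T -> R,
          (forall n, is_pmf (pn n)) -> (forall n, is_pmf (qn n)) ->
          (\esum_(x in [set: T]) (`|pn n x - p x|)%:E) @[n --> \oo] --> 0 ->
          (\esum_(x in [set: T]) (`|qn n x - q x|)%:E) @[n --> \oo] --> 0 ->
          CMd beta (pn n) (qn n) @[n --> \oo] --> CMd beta p q)) /\
    CMd b p q @[b --> (0:R)^'+] --> TVd p q).
Proof.
have half : ((2^-1)%:E : \bar R) \is a fin_num by [].
split.
  move=> p q f hp hq hf.
  have hp' : dens (@lebesgue_measure R) p := hp.
  have hq' : dens (@lebesgue_measure R) q := hq.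
  have hf' : dens (@lebesgue_measure R) f := hf.
  split; last first.
    exact: (cvgeZl half (conv5 hp' hq')).
  move=> beta b0.
  split; first by split; [exact: CMg_ge0|exact: CMg_eq0].
  split; first exact: CMg_sym.
  split; first exact: CMg_tri.
  split; first by split; [exact: CMg_ge0|exact: CMg_le1].
  move=> pn qn hpn hqn cp cq.
  exact: (cvgeZl half (conv6 b0 hp' hq' hpn hqn cp cq)).
move=> T p q f hp hq hf.
have hp' := pe_dens hp; have hq' := pe_dens hq; have hf' := pe_dens hf.
split; last first.
  rewrite TVd_eq.
  have -> : (fun b => CMd b p q) = (fun b => CMg (@counting _ R) b (pe p) (pe q)).
    by apply/funext => b; rewrite CMd_eq.
  exact: (cvgeZl half (conv5 hp' hq')).
move=> beta b0.
split.
  split; first by rewrite CMd_eq; exact: CMg_ge0.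
  split; last first.
    by move=> <-; rewrite CMd_eq; apply/CMg_eq0 => //; exact: aeW.
  move=> /eqP; rewrite /CMd mule_eq0 eqe invr_eq0 pnatr_eq0 /= => /eqP S0.
  apply/funext => x; apply: (@cm_eq0 _ beta _ _ (hp.1 x) (hq.1 x)).
  have h : (cm_integrand beta (p x) (q x))%:E <= 0.
    rewrite -S0; apply: esum_ge; exists [set x]; first by split; [exact: finite_set1|].
    by rewrite fsbig_set1.
  by apply/eqP; rewrite eq_le cm_ge0 andbT -lee_fin.
rewrite !CMd_eq.
split; first exact: CMg_sym.
split; first exact: CMg_tri.
split; first by split; [exact: CMg_ge0|exact: CMg_le1].
move=> pn qn hpn hqn cp cq.
have -> : (fun n => CMd beta (pn n) (qn n)) =
    (fun n => CMg (@counting _ R) beta (pe (pn n)) (pe (qn n))).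
  by apply/funext => n; rewrite CMd_eq.
apply: (cvgeZl half (conv6 b0 hp' hq' (fun n => pe_dens (hpn n)) (fun n => pe_dens (hqn n)) _ _)).
- by under eq_fun do rewrite -L1_eq.
- by under eq_fun do rewrite -L1_eq.
Qed.
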